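(* Let $p,q\in\mathbb{R}$ with $q\neq0$ and $$\hat{\mathcal{B}}=\begin{pmatrix}p&qi&\frac{q}{6}(\sqrt5\,k+2\ell)\\ -qi&p&\frac q2 j\\ -\frac q6(\sqrt5\,k+2\ell)&-\frac q2 j&p\end{pmatrix},\qquad w_1=\begin{pmatrix}3k\\ \sqrt5 j-2i\ell\\ -7-\sqrt5 k\ell\end{pmatrix}.$$ There do not exist nonzero $u,v\in\mathbb{O}^3$ and $\mu,\nu\in\mathbb{O}$ with $\hat{\mathcal{B}}u=u\mu$, $\hat{\mathcal{B}}v=v\nu$ such that the three vectors $w_1,u,v$ are pairwise orthogonal in the sense that $(xx^\dagger)y=0$ for every ordered pair $(x,y)$ of distinct vectors among $w_1,u,v$.
   Context: $\mathbb{O}$ is the octonion algebra with real basis $1,i,j,k,\ell,i\ell,j\ell,k\ell$, obtained by Cayley–Dickson doubling of the quaternions ($ij=k$, $jk=i$, $ki=j$): $(a+b\ell)(c+d\ell)=(ac-\overline{d}b)+(da+b\overline{c})\ell$ for quaternions $a,b,c,d$. $xx^\dagger$ is the $3\times3$ matrix with entries $x_i\overline{x_j}$, and $(xx^\dagger)y$ is the matrix–vector product computed with octonionic multiplication. $u\mu$ means componentwise right multiplication. *)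

(* Defs.v *)
From Stdlib Require Import Reals.
Open Scope R_scope.

(* Quaternions a0 + a1 i + a2 j + a3 k, with ij = k, jk = i, ki = j. *)
Record quat := Quat { q0 : R; q1 : R; q2 : R; q3 : R }.

Definition qadd (x y : quat) : quat :=
  Quat (q0 x + q0 y) (q1 x + q1 y) (q2 x + q2 y) (q3 x + q3 y).
Definition qopp (x : quat) : quat := Quat (- q0 x) (- q1 x) (- q2 x) (- q3 x).
Definition qconj (x : quat) : quat := Quat (q0 x) (- q1 x) (- q2 x) (- q3 x).
Definition qmul (x y : quat) : quat :=
  Quat (q0 x * q0 y - q1 x * q1 y - q2 x * q2 y - q3 x * q3 y)
       (q0 x * q1 y + q1 x * q0 y + q2 x * q3 y - q3 x * q2 y)
       (q0 x * q2 y - q1 x * q3 y + q2 x * q0 y + q3 x * q1 y)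
       (q0 x * q3 y + q1 x * q2 y - q2 x * q1 y + q3 x * q0 y).

(* Octonions a + b l (Cayley-Dickson doubling of the quaternions). *)
Record oct := Oct { oa : quat; ob : quat }.

Definition oadd (x y : oct) : oct := Oct (qadd (oa x) (oa y)) (qadd (ob x) (ob y)).
Definition oopp (x : oct) : oct := Oct (qopp (oa x)) (qopp (ob x)).
Definition oconj (x : oct) : oct := Oct (qconj (oa x)) (qopp (ob x)).
(* (a + b l)(c + d l) = (ac - conj(d) b) + (d a + b conj(c)) l *)
Definition omul (x y : oct) : oct :=
  Oct (qadd (qmul (oa x) (oa y)) (qopp (qmul (qconj (ob y)) (ob x))))
      (qadd (qmul (ob y) (oa x)) (qmul (ob x) (qconj (oa y)))).

Definition oreal (r : R) : oct := Oct (Quat r 0 0 0) (Quat 0 0 0 0).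
Definition ozero : oct := oreal 0.
Definition oscal (r : R) (x : oct) : oct := omul (oreal r) x.
Definition oi : oct := Oct (Quat 0 1 0 0) (Quat 0 0 0 0).
Definition oj : oct := Oct (Quat 0 0 1 0) (Quat 0 0 0 0).
Definition ok : oct := Oct (Quat 0 0 0 1) (Quat 0 0 0 0).
Definition ol : oct := Oct (Quat 0 0 0 0) (Quat 1 0 0 0).

Inductive idx3 := I0 | I1 | I2.
Definition ovec := idx3 -> oct.
Definition omat := idx3 -> idx3 -> oct.

Definition vzero (x : ovec) : Prop := forall i, x i = ozero.

Definition mvmul (M : omat) (y : ovec) : ovec :=
  fun i => oadd (omul (M i I0) (y I0)) (oadd (omul (M i I1) (y I1)) (omul (M i I2) (y I2))).

Definition outer (x : ovec) : omat := fun i j => omul (x i) (oconj (x j)).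

Definition vrmul (u : ovec) (mu : oct) : ovec := fun i => omul (u i) mu.

Definition orth (x y : ovec) : Prop := vzero (mvmul (outer x) y).

Definition mk3 (a b c : oct) : ovec :=
  fun i => match i with I0 => a | I1 => b | I2 => c end.
Definition mk33 (a b c d e f g h k : oct) : omat :=
  fun i => match i with I0 => mk3 a b c | I1 => mk3 d e f | I2 => mk3 g h k end.

Definition Bhat (p q : R) : omat :=
  let e13 := oscal (q / 6) (oadd (oscal (sqrt 5) ok) (oscal 2 ol)) in
  mk33 (oreal p)            (oscal q oi)            e13
       (oopp (oscal q oi))  (oreal p)               (oscal (q / 2) oj)
       (oopp e13)           (oopp (oscal (q / 2) oj)) (oreal p).

Definition w1 : ovec :=
  mk3 (oscal 3 ok)
      (oadd (oscal (sqrt 5) oj) (oopp (oscal 2 (omul oi ol))))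
      (oadd (oreal (-7)) (oopp (oscal (sqrt 5) (omul ok ol)))).

(* Main.v *)
Require Import Defs.
From Stdlib Require Import Reals Lra Psatz.
Open Scope R_scope.
Lemma lin_step (t c e : R) : e = 0 -> t - c * e = 0 -> t = 0.
Proof. intros he h. rewrite he in h. lra. Qed.
Lemma sq0 (a w : R) : 0 < w -> w*(a*a) = 0 -> a = 0.
Proof. intros hw h. apply Rmult_integral in h. destruct h as [h|h]. lra. apply Rmult_integral in h; destruct h; auto. Qed.
Lemma sq4 (a b c d wa wb wc wd : R) : 0 < wa -> 0 < wb -> 0 < wc -> 0 < wd -> wa*(a*a) + wb*(b*b) + wc*(c*c) + wd*(d*d) = 0 -> a = 0 /\ b = 0 /\ c = 0 /\ d = 0.
Proof. intros. assert (0 <= a*a) by nra. assert (0 <= b*b) by nra. assert (0 <= c*c) by nra. assert (0 <= d*d) by nra.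
assert (wa*(a*a)=0) by nra. assert (wb*(b*b)=0) by nra. assert (wc*(c*c)=0) by nra. assert (wd*(d*d)=0) by nra.
split; [apply (sq0 a wa)|split; [apply (sq0 b wb)|split; [apply (sq0 c wc)|apply (sq0 d wd)]]]; assumption. Qed.
From Stdlib Require Import FunctionalExtensionality.
Lemma oct_ext (a0 a1 a2 a3 a4 a5 a6 a7 b0 b1 b2 b3 b4 b5 b6 b7 : R) : a0 = b0 -> a1 = b1 -> a2 = b2 -> a3 = b3 -> a4 = b4 -> a5 = b5 -> a6 = b6 -> a7 = b7 -> Oct (Quat a0 a1 a2 a3) (Quat a4 a5 a6 a7) = Oct (Quat b0 b1 b2 b3) (Quat b4 b5 b6 b7).
Proof. intros; subst; reflexivity. Qed.
Definition w1e : ovec := mk3 (Oct (Quat 0 0 0 (3)) (Quat 0 0 0 0)) (Oct (Quat 0 0 ((sqrt 5)) 0) (Quat 0 ((-2)) 0 0)) (Oct (Quat ((-7)) 0 0 0) (Quat 0 0 0 ((-1)*(sqrt 5)))).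
Definition Wexp : omat := mk33 (Oct (Quat (9) 0 0 0) (Quat 0 0 0 0)) (Oct (Quat 0 (3*(sqrt 5)) 0 0) (Quat 0 0 ((-6)) 0)) (Oct (Quat 0 0 0 ((-21))) (Quat ((-3)*(sqrt 5)) 0 0 0)) (Oct (Quat 0 ((-3)*(sqrt 5)) 0 0) (Quat 0 0 (6) 0)) (Oct (Quat (4 + (sqrt 5)*(sqrt 5)) 0 0 0) (Quat 0 0 0 0)) (Oct (Quat 0 0 ((-9)*(sqrt 5)) 0) (Quat 0 (14 + (-1)*(sqrt 5)*(sqrt 5)) 0 0)) (Oct (Quat 0 0 0 (21)) (Quat (3*(sqrt 5)) 0 0 0)) (Oct (Quat 0 0 (9*(sqrt 5)) 0) (Quat 0 ((-14) + (sqrt 5)*(sqrt 5)) 0 0)) (Oct (Quat (49 + (sqrt 5)*(sqrt 5)) 0 0 0) (Quat 0 0 0 0)).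
Definition Bexp (p q : R) : omat := mk33 (Oct (Quat (p) 0 0 0) (Quat 0 0 0 0)) (Oct (Quat 0 (q) 0 0) (Quat 0 0 0 0)) (Oct (Quat 0 0 0 ((1/6)*q*(sqrt 5))) (Quat ((1/3)*q) 0 0 0)) (Oct (Quat 0 ((-1)*q) 0 0) (Quat 0 0 0 0)) (Oct (Quat (p) 0 0 0) (Quat 0 0 0 0)) (Oct (Quat 0 0 ((1/2)*q) 0) (Quat 0 0 0 0)) (Oct (Quat 0 0 0 ((-1/6)*q*(sqrt 5))) (Quat ((-1/3)*q) 0 0 0)) (Oct (Quat 0 0 ((-1/2)*q) 0) (Quat 0 0 0 0)) (Oct (Quat (p) 0 0 0) (Quat 0 0 0 0)).
Lemma w1_eq : w1 = w1e.
Proof. apply functional_extensionality; intro i.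
destruct i; cbv beta iota zeta delta [mk3 mk33 outer w1 w1e Bhat oadd omul oconj oopp oscal oreal ozero oi oj ok ol qadd qmul qconj qopp q0 q1 q2 q3 oa ob]; apply oct_ext; ring. Qed.
Lemma outer_w1 : outer w1 = Wexp.
Proof. rewrite w1_eq. apply functional_extensionality; intro i; apply functional_extensionality; intro j.
destruct i, j; cbv beta iota zeta delta [Wexp mk3 mk33 outer w1 w1e Bhat oadd omul oconj oopp oscal oreal ozero oi oj ok ol qadd qmul qconj qopp q0 q1 q2 q3 oa ob]; apply oct_ext; ring. Qed.
Lemma Bhat_eq (p q : R) : Bhat p q = Bexp p q.
Proof. apply functional_extensionality; intro i; apply functional_extensionality; intro j.
destruct i, j; cbv beta iota zeta delta [Bexp mk3 mk33 outer w1 w1e Bhat oadd omul oconj oopp oscal oreal ozero oi oj ok ol qadd qmul qconj qopp q0 q1 q2 q3 oa ob]; apply oct_ext; field. Qed.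
Definition vecof (x00 x01 x02 x03 x04 x05 x06 x07 x10 x11 x12 x13 x14 x15 x16 x17 x20 x21 x22 x23 x24 x25 x26 x27 : R) : ovec :=
  mk3 (Oct (Quat x00 x01 x02 x03) (Quat x04 x05 x06 x07))
      (Oct (Quat x10 x11 x12 x13) (Quat x14 x15 x16 x17))
      (Oct (Quat x20 x21 x22 x23) (Quat x24 x25 x26 x27)).
Lemma core (s : R) (hs : s*s = 5) (hs0 : 0 < s) (x00 x01 x02 x03 x04 x05 x06 x07 x10 x11 x12 x13 x14 x15 x16 x17 x20 x21 x22 x23 x24 x25 x26 x27 m0 m1 m2 m3 m4 m5 m6 m7 : R) :
  ((-3)*s*x11 + 3*s*x24 + 9*x00 + 6*x16 + 21*x23) = 0 ->
  (3*s*x10 + (-3)*s*x25 + 9*x01 + 6*x17 + 21*x22) = 0 ->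
  ((-3)*s*x13 + (-3)*s*x26 + 9*x02 + 6*x14 + (-21)*x21) = 0 ->
  (3*s*x12 + (-3)*s*x27 + 9*x03 + (-6)*x15 + (-21)*x20) = 0 ->
  ((-3)*s*x15 + (-3)*s*x20 + 9*x04 + (-6)*x12 + 21*x27) = 0 ->
  (3*s*x14 + 3*s*x21 + 9*x05 + 6*x13 + (-21)*x26) = 0 ->
  (3*s*x17 + 3*s*x22 + 9*x06 + (-6)*x10 + 21*x25) = 0 ->
  ((-3)*s*x16 + 3*s*x23 + 9*x07 + (-6)*x11 + (-21)*x24) = 0 ->
  (3*s*x01 + 9*s*x22 + (-6)*x06 + 9*x10 + (-9)*x25) = 0 ->
  ((-3)*s*x00 + (-9)*s*x23 + (-6)*x07 + 9*x11 + (-9)*x24) = 0 ->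
  (3*s*x03 + (-9)*s*x20 + (-6)*x04 + 9*x12 + 9*x27) = 0 ->
  ((-3)*s*x02 + 9*s*x21 + 6*x05 + 9*x13 + (-9)*x26) = 0 ->
  (3*s*x05 + 9*s*x26 + 6*x02 + 9*x14 + 9*x21) = 0 ->
  ((-3)*s*x04 + 9*s*x27 + (-6)*x03 + 9*x15 + 9*x20) = 0 ->
  ((-3)*s*x07 + (-9)*s*x24 + 6*x00 + 9*x16 + 9*x23) = 0 ->
  (3*s*x06 + (-9)*s*x25 + 6*x01 + 9*x17 + (-9)*x22) = 0 ->
  ((-3)*s*x04 + (-9)*s*x12 + (-21)*x03 + 9*x15 + 54*x20) = 0 ->
  (3*s*x05 + 9*s*x13 + (-21)*x02 + 9*x14 + 54*x21) = 0 ->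
  (3*s*x06 + 9*s*x10 + 21*x01 + (-9)*x17 + 54*x22) = 0 ->
  (3*s*x07 + (-9)*s*x11 + 21*x00 + 9*x16 + 54*x23) = 0 ->
  (3*s*x00 + (-9)*s*x16 + (-21)*x07 + (-9)*x11 + 54*x24) = 0 ->
  ((-3)*s*x01 + (-9)*s*x17 + 21*x06 + (-9)*x10 + 54*x25) = 0 ->
  ((-3)*s*x02 + 9*s*x14 + (-21)*x05 + (-9)*x13 + 54*x26) = 0 ->
  ((-3)*s*x03 + 9*s*x15 + 21*x04 + 9*x12 + 54*x27) = 0 ->
  ((-1)*m0*x00 + m1*x01 + m2*x02 + m3*x03 + m4*x04 + m5*x05 + m6*x06 + m7*x07 + (-1/6)*s*x23 + (-1)*x11 + (-1/3)*x24) = 0 ->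
  ((-1)*m0*x01 + (-1)*m1*x00 + m2*x03 + (-1)*m3*x02 + m4*x05 + (-1)*m5*x04 + (-1)*m6*x07 + m7*x06 + (-1/6)*s*x22 + x10 + (1/3)*x25) = 0 ->
  ((-1)*m0*x02 + (-1)*m1*x03 + (-1)*m2*x00 + m3*x01 + m4*x06 + m5*x07 + (-1)*m6*x04 + (-1)*m7*x05 + (1/6)*s*x21 + (-1)*x13 + (1/3)*x26) = 0 ->
  ((-1)*m0*x03 + m1*x02 + (-1)*m2*x01 + (-1)*m3*x00 + m4*x07 + (-1)*m5*x06 + m6*x05 + (-1)*m7*x04 + (1/6)*s*x20 + x12 + (1/3)*x27) = 0 ->
  ((-1)*m0*x04 + (-1)*m1*x05 + (-1)*m2*x06 + (-1)*m3*x07 + (-1)*m4*x00 + m5*x01 + m6*x02 + m7*x03 + (-1/6)*s*x27 + (-1)*x15 + (1/3)*x20) = 0 ->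
  ((-1)*m0*x05 + m1*x04 + (-1)*m2*x07 + m3*x06 + (-1)*m4*x01 + (-1)*m5*x00 + (-1)*m6*x03 + m7*x02 + (1/6)*s*x26 + x14 + (-1/3)*x21) = 0 ->
  ((-1)*m0*x06 + m1*x07 + m2*x04 + (-1)*m3*x05 + (-1)*m4*x02 + m5*x03 + (-1)*m6*x00 + (-1)*m7*x01 + (-1/6)*s*x25 + x17 + (-1/3)*x22) = 0 ->
  ((-1)*m0*x07 + (-1)*m1*x06 + m2*x05 + m3*x04 + (-1)*m4*x03 + (-1)*m5*x02 + m6*x01 + (-1)*m7*x00 + (1/6)*s*x24 + (-1)*x16 + (-1/3)*x23) = 0 ->
  ((-1)*m0*x10 + m1*x11 + m2*x12 + m3*x13 + m4*x14 + m5*x15 + m6*x16 + m7*x17 + x01 + (-1/2)*x22) = 0 ->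
  ((-1)*m0*x11 + (-1)*m1*x10 + m2*x13 + (-1)*m3*x12 + m4*x15 + (-1)*m5*x14 + (-1)*m6*x17 + m7*x16 + (-1)*x00 + (1/2)*x23) = 0 ->
  ((-1)*m0*x12 + (-1)*m1*x13 + (-1)*m2*x10 + m3*x11 + m4*x16 + m5*x17 + (-1)*m6*x14 + (-1)*m7*x15 + x03 + (1/2)*x20) = 0 ->
  ((-1)*m0*x13 + m1*x12 + (-1)*m2*x11 + (-1)*m3*x10 + m4*x17 + (-1)*m5*x16 + m6*x15 + (-1)*m7*x14 + (-1)*x02 + (-1/2)*x21) = 0 ->
  ((-1)*m0*x14 + (-1)*m1*x15 + (-1)*m2*x16 + (-1)*m3*x17 + (-1)*m4*x10 + m5*x11 + m6*x12 + m7*x13 + x05 + (-1/2)*x26) = 0 ->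
  ((-1)*m0*x15 + m1*x14 + (-1)*m2*x17 + m3*x16 + (-1)*m4*x11 + (-1)*m5*x10 + (-1)*m6*x13 + m7*x12 + (-1)*x04 + (-1/2)*x27) = 0 ->
  ((-1)*m0*x16 + m1*x17 + m2*x14 + (-1)*m3*x15 + (-1)*m4*x12 + m5*x13 + (-1)*m6*x10 + (-1)*m7*x11 + (-1)*x07 + (1/2)*x24) = 0 ->
  ((-1)*m0*x17 + (-1)*m1*x16 + m2*x15 + m3*x14 + (-1)*m4*x13 + (-1)*m5*x12 + m6*x11 + (-1)*m7*x10 + x06 + (1/2)*x25) = 0 ->
  ((-1)*m0*x20 + m1*x21 + m2*x22 + m3*x23 + m4*x24 + m5*x25 + m6*x26 + m7*x27 + (1/6)*s*x03 + (1/3)*x04 + (1/2)*x12) = 0 ->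
  ((-1)*m0*x21 + (-1)*m1*x20 + m2*x23 + (-1)*m3*x22 + m4*x25 + (-1)*m5*x24 + (-1)*m6*x27 + m7*x26 + (1/6)*s*x02 + (-1/3)*x05 + (-1/2)*x13) = 0 ->
  ((-1)*m0*x22 + (-1)*m1*x23 + (-1)*m2*x20 + m3*x21 + m4*x26 + m5*x27 + (-1)*m6*x24 + (-1)*m7*x25 + (-1/6)*s*x01 + (-1/3)*x06 + (-1/2)*x10) = 0 ->
  ((-1)*m0*x23 + m1*x22 + (-1)*m2*x21 + (-1)*m3*x20 + m4*x27 + (-1)*m5*x26 + m6*x25 + (-1)*m7*x24 + (-1/6)*s*x00 + (-1/3)*x07 + (1/2)*x11) = 0 ->
  ((-1)*m0*x24 + (-1)*m1*x25 + (-1)*m2*x26 + (-1)*m3*x27 + (-1)*m4*x20 + m5*x21 + m6*x22 + m7*x23 + (1/6)*s*x07 + (-1/3)*x00 + (1/2)*x16) = 0 ->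
  ((-1)*m0*x25 + m1*x24 + (-1)*m2*x27 + m3*x26 + (-1)*m4*x21 + (-1)*m5*x20 + (-1)*m6*x23 + m7*x22 + (-1/6)*s*x06 + (1/3)*x01 + (1/2)*x17) = 0 ->
  ((-1)*m0*x26 + m1*x27 + m2*x24 + (-1)*m3*x25 + (-1)*m4*x22 + m5*x23 + (-1)*m6*x20 + (-1)*m7*x21 + (1/6)*s*x05 + (1/3)*x02 + (-1/2)*x14) = 0 ->
  ((-1)*m0*x27 + (-1)*m1*x26 + m2*x25 + m3*x24 + (-1)*m4*x23 + (-1)*m5*x22 + m6*x21 + (-1)*m7*x20 + (-1/6)*s*x04 + (1/3)*x03 + (-1/2)*x15) = 0 ->
  x00 = 0 /\ x01 = 0 /\ x02 = (1/3)*s*x13 /\ x03 = (3/2)*x15 /\ x04 = 0 /\ x05 = (-2/3)*x13 /\ x06 = 0 /\ x07 = 0 /\ x10 = 0 /\ x11 = 0 /\ x12 = (-1/2)*s*x15 /\ x14 = 0 /\ x16 = 0 /\ x17 = 0 /\ x20 = 0 /\ x21 = 0 /\ x22 = 0 /\ x23 = 0 /\ x24 = 0 /\ x25 = 0 /\ x26 = 0 /\ x27 = 0.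
Proof.
intros o00 o01 o02 o03 o04 o05 o06 o07 o10 o11 o12 o13 o14 o15 o16 o17 o20 o21 o22 o23 o24 o25 o26 o27 e00 e01 e02 e03 e04 e05 e06 e07 e10 e11 e12 e13 e14 e15 e16 e17 e20 e21 e22 e23 e24 e25 e26 e27.
assert (hs' : s*s - 5 = 0) by lra.
assert (hp_x00 : x00 = ((-7/3)*x16 + (-7/3)*x23)).
{ apply Rminus_diag_uniq.
  apply (lin_step _ ((7/54)) _ o00).
  apply (lin_step _ ((-1/27)*s) _ o07).
  apply (lin_step _ ((1/54)) _ o16).
  apply (lin_step _ ((-1/54)*s) _ o24).
  apply (lin_step _ ((1/18)*x00 + (-5/18)*x16 + (1/9)*x23) _ hs').
  field. }
assert (hp_x01 : x01 = ((3/2)*s*x25 + (-3)*x17)).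
{ apply Rminus_diag_uniq.
  apply (lin_step _ ((1/4)) _ o01).
  apply (lin_step _ ((1/12)) _ o17).
  apply (lin_step _ ((-1/12)) _ o22).
  field. }
assert (hp_x02 : x02 = ((1/3)*s*x13 + (-2)*s*x26)).
{ apply Rminus_diag_uniq.
  apply (lin_step _ ((-5/81)) _ o02).
  apply (lin_step _ ((-5/162)*s) _ o05).
  apply (lin_step _ ((7/54)) _ o14).
  apply (lin_step _ ((-1/27)) _ o21).
  apply (lin_step _ ((5/54)*x14 + (5/54)*x21) _ hs').
  field. }
assert (hp_x03 : x03 = ((18/5)*s*x27 + (3/2)*x15)).
{ apply Rminus_diag_uniq.
  apply (lin_step _ ((3/20)) _ o03).
  apply (lin_step _ ((-1/20)*s) _ o04).
  apply (lin_step _ ((-7/30)) _ o15).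
  apply (lin_step _ ((1/12)) _ o20).
  apply (lin_step _ ((-3/20)*x15 + (-3/20)*x20) _ hs').
  field. }
assert (hp_x04 : x04 = 0).
{ apply Rminus_diag_uniq.
  apply (lin_step _ ((-1/10)*s) _ o03).
  apply (lin_step _ ((-1/30)*s) _ o15).
  apply (lin_step _ ((-1/30)*s) _ o20).
  apply (lin_step _ ((-1/5)*x04) _ hs').
  field. }
assert (hp_x05 : x05 = ((-2/3)*x13 + 4*x26)).
{ apply Rminus_diag_uniq.
  apply (lin_step _ ((-5/162)*s) _ o02).
  apply (lin_step _ ((14/81)) _ o05).
  apply (lin_step _ ((-1/54)*s) _ o14).
  apply (lin_step _ ((-1/54)*s) _ o21).
  apply (lin_step _ ((1/9)*x05 + (2/27)*x13 + (2/27)*x26) _ hs').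
  field. }
assert (hp_x06 : x06 = ((3/5)*s*x17 + (-3/2)*x25)).
{ apply Rminus_diag_uniq.
  apply (lin_step _ ((-3/35)*s) _ o01).
  apply (lin_step _ ((1/28)) _ o06).
  apply (lin_step _ ((1/84)*s) _ o17).
  apply (lin_step _ ((1/30)*s) _ o22).
  apply (lin_step _ ((-19/140)*x06 + (-3/70)*x10 + (-3/20)*x25) _ hs').
  field. }
assert (hp_x07 : x07 = ((-1/3)*s*x16 + (-1/3)*s*x23)).
{ apply Rminus_diag_uniq.
  apply (lin_step _ ((4/135)*s) _ o00).
  apply (lin_step _ ((-1/54)) _ o07).
  apply (lin_step _ ((-7/270)*s) _ o16).
  apply (lin_step _ ((-1/27)) _ o24).
  apply (lin_step _ ((-7/90)*x07 + (4/45)*x11 + (-29/90)*x24) _ hs').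
  field. }
assert (hp_x10 : x10 = ((7/5)*s*x17)).
{ apply Rminus_diag_uniq.
  apply (lin_step _ ((-7/60)*s) _ o01).
  apply (lin_step _ ((-1/12)) _ o06).
  apply (lin_step _ ((1/20)*s) _ o22).
  apply (lin_step _ ((-3/20)*x06 + (-1/10)*x10 + (-7/20)*x25) _ hs').
  field. }
assert (hp_x11 : x11 = ((-1)*s*x16)).
{ apply Rminus_diag_uniq.
  apply (lin_step _ ((1/54)*s) _ o00).
  apply (lin_step _ ((-7/54)) _ o07).
  apply (lin_step _ ((-1/18)) _ o24).
  apply (lin_step _ ((1/18)*x11 + (-1/18)*x24) _ hs').
  field. }
assert (hp_x12 : x12 = ((-1/2)*s*x15)).
{ apply Rminus_diag_uniq.
  apply (lin_step _ ((-7/60)*s) _ o03).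
  apply (lin_step _ ((-1/12)) _ o04).
  apply (lin_step _ ((-1/20)*s) _ o20).
  apply (lin_step _ ((-3/20)*x04 + (-1/10)*x12 + (-7/20)*x27) _ hs').
  field. }
assert (hp_x14 : x14 = 0).
{ apply Rminus_diag_uniq.
  apply (lin_step _ ((7/54)) _ o02).
  apply (lin_step _ ((-1/54)*s) _ o05).
  apply (lin_step _ ((1/18)) _ o21).
  apply (lin_step _ ((1/18)*x14 + (1/18)*x21) _ hs').
  field. }
assert (hp_x20 : x20 = ((7/5)*s*x27)).
{ apply Rminus_diag_uniq.
  apply (lin_step _ ((-1/15)) _ o03).
  apply (lin_step _ ((-1/30)*s) _ o04).
  apply (lin_step _ ((-1/10)) _ o15).
  apply (lin_step _ ((-1/10)*x15 + (-1/10)*x20) _ hs').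
  field. }
assert (hp_x21 : x21 = ((-1)*s*x26)).
{ apply Rminus_diag_uniq.
  apply (lin_step _ ((-1/27)) _ o02).
  apply (lin_step _ ((-1/54)*s) _ o05).
  apply (lin_step _ ((1/18)) _ o14).
  apply (lin_step _ ((1/18)*x14 + (1/18)*x21) _ hs').
  field. }
assert (hp_x22 : x22 = ((-1/2)*s*x25)).
{ apply Rminus_diag_uniq.
  apply (lin_step _ ((1/42)) _ o01).
  apply (lin_step _ ((1/84)*s) _ o06).
  apply (lin_step _ ((-1/28)) _ o17).
  apply (lin_step _ ((-1/28)*x17 + (-1/28)*x22) _ hs').
  field. }
assert (hp_x24 : x24 = 0).
{ apply Rminus_diag_uniq.
  apply (lin_step _ ((1/135)*s) _ o00).
  apply (lin_step _ ((-1/54)) _ o07).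
  apply (lin_step _ ((-1/90)*s) _ o16).
  apply (lin_step _ ((-1/30)*x07 + (1/45)*x11 + (-11/90)*x24) _ hs').
  field. }
subst x00.
subst x01.
subst x02.
subst x03.
subst x04.
subst x05.
subst x06.
subst x07.
subst x10.
subst x11.
subst x12.
subst x14.
subst x20.
subst x21.
subst x22.
subst x24.
destruct (Req_dec (x23*x23 + (9/4)*x25*x25 + 6*x26*x26 + (54/5)*x27*x27) 0) as [hN|hN].
- assert (hq4 : 1*(x23*x23) + (9/4)*(x25*x25) + 6*(x26*x26) + (54/5)*(x27*x27) = 0) by lra.
  destruct (sq4 _ _ _ _ 1 (9/4) 6 (54/5) ltac:(lra) ltac:(lra) ltac:(lra) ltac:(lra) hq4) as [z1 [z2 [z3 z4]]].
  subst x23 x25 x26 x27.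
  assert (hz16 : x16 = 0).
  { apply Rminus_diag_uniq.
    apply (lin_step _ (1) _ e24).
    apply (lin_step _ ((1/18)*x16) _ hs').
    field. }
  subst x16.
  assert (hz17 : x17 = 0).
  { apply Rminus_diag_uniq.
    apply (lin_step _ ((-1)) _ e25).
    apply (lin_step _ ((-1/10)*x17) _ hs').
    field. }
  subst x17.
  repeat split; ring.
- assert (hA : (x23*x23 + (9/4)*x25*x25 + 6*x26*x26 + (54/5)*x27*x27) * (m0 - (1/2)*s) = 0).
  { apply (lin_step _ ((-7/5)*s*x27) _ e20).
    apply (lin_step _ (s*x26) _ e21).
    apply (lin_step _ ((1/2)*s*x25) _ e22).
    apply (lin_step _ ((-1)*x23) _ e23).
    apply (lin_step _ ((-1)*x25) _ e25).
    apply (lin_step _ ((-1)*x26) _ e26).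
    apply (lin_step _ ((-1)*x27) _ e27).
    apply (lin_step _ ((-1/4)*m0*x25*x25 + (-1)*m0*x26*x26 + (-49/25)*m0*x27*x27 + (-1/18)*s*x13*x26 + (1/8)*s*x25*x25 + (1/3)*s*x26*x26 + (21/25)*s*x27*x27 + (1/10)*x17*x25) _ hs').
    field. }
  assert (hm0 : m0 = (1/2)*s) by (destruct (Rmult_integral _ _ hA) as [h|h]; [exfalso; apply hN; exact h| lra]).
  subst m0.
  assert (hD : 1*((x13 - 3*x26)*(x13 - 3*x26)) + (9/4)*((x15 + (6/5)*s*x27)*(x15 + (6/5)*s*x27)) + 6*((x16 + (1/2)*x23)*(x16 + (1/2)*x23)) + (54/5)*((x17 - (1/4)*s*x25)*(x17 - (1/4)*s*x25)) = 0).
  { apply (lin_step _ ((7/25)*s*x16 + (7/25)*s*x23) _ e00).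
    apply (lin_step _ ((-9/50)*s*s*x25 + (9/25)*s*x17) _ e01).
    apply (lin_step _ ((-1/25)*s*s*x13 + (6/25)*s*s*x26) _ e02).
    apply (lin_step _ ((-54/125)*s*s*x27 + (-9/50)*s*x15) _ e03).
    apply (lin_step _ ((2/25)*s*x13 + (-12/25)*s*x26) _ e05).
    apply (lin_step _ ((-9/125)*s*s*x17 + (9/50)*s*x25) _ e06).
    apply (lin_step _ ((1/25)*s*s*x16 + (1/25)*s*s*x23) _ e07).
    apply (lin_step _ ((-21/125)*s*s*x17) _ e10).
    apply (lin_step _ ((3/25)*s*s*x16) _ e11).
    apply (lin_step _ ((3/50)*s*s*x15) _ e12).
    apply (lin_step _ ((-3/25)*s*x13) _ e13).
    apply (lin_step _ ((-3/25)*s*x15) _ e15).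
    apply (lin_step _ ((-3/25)*s*x16) _ e16).
    apply (lin_step _ ((-3/25)*s*x17) _ e17).
    apply (lin_step _ ((-1/150)*s*s*x13*x13 + (11/150)*s*s*x13*x26 + (-3/200)*s*s*x15*x15 + (-1/15)*s*s*x16*x16 + (-1/75)*s*s*x16*x23 + (-87/625)*s*s*x17*x17 + (-1/150)*s*s*x23*x23 + (-3/25)*s*s*x25*x25 + (-1/5)*s*s*x26*x26 + (-423/625)*s*s*x27*x27 + (-27/25)*s*x15*x27 + (291/250)*s*x17*x25 + (-1/5)*x13*x13 + (6/5)*x13*x26 + (-9/20)*x15*x15 + (-6/5)*x16*x16 + (-6/5)*x16*x23 + (-54/25)*x17*x17 + (-3/10)*x23*x23 + (-9/5)*x26*x26) _ hs').
    field. }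
  destruct (sq4 _ _ _ _ 1 (9/4) 6 (54/5) ltac:(lra) ltac:(lra) ltac:(lra) ltac:(lra) hD) as [d1 [d2 [d3 d4]]].
  assert (l1 : x13 = 3*x26) by lra. subst x13.
  assert (l2 : x15 = -(6/5)*s*x27) by lra. subst x15.
  assert (l3 : x16 = -(1/2)*x23) by lra. subst x16.
  assert (l4 : x17 = (1/4)*s*x25) by lra. subst x17.
  assert (k1 : x25 * (x23*x23 + (9/4)*x25*x25 + 6*x26*x26 + (54/5)*x27*x27) = 0).
  { apply (lin_step _ ((2/5)*s*s*s*x25*x25 + (8/5)*s*s*s*x26*x26 + (392/125)*s*s*s*x27*x27 + (8/5)*s*x23*x23 + (8/5)*s*x25*x25 + (8/5)*s*x26*x26 + (8/5)*s*x27*x27) _ e10).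
    apply (lin_step _ ((-38/125)*s*s*s*s*x25*x27 + (4/5)*s*s*s*x23*x26 + (38/25)*s*s*x25*x27 + (-4)*s*x23*x26) _ e20).
    apply (lin_step _ ((14/25)*s*s*s*s*x25*x26 + (4/25)*s*s*s*x23*x27 + (-14/5)*s*s*x25*x26 + (-4/5)*s*x23*x27) _ e21).
    apply (lin_step _ ((7/25)*s*s*s*s*x25*x25 + (168/125)*s*s*s*s*x27*x27 + (4/5)*s*s*x23*x23 + (2/5)*s*s*x25*x25 + (24/5)*s*s*x26*x26 + (48/25)*s*s*x27*x27) _ e22).
    apply (lin_step _ ((-24/25)*s*s*s*s*x26*x27 + (-4/25)*s*s*s*x23*x25 + (24/5)*s*s*x26*x27 + (4/5)*s*x23*x25) _ e23).
    apply (lin_step _ ((-24/25)*s*s*s*x26*x27 + (24/5)*s*x26*x27) _ e24).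
    apply (lin_step _ ((-9/25)*s*s*s*x25*x25 + (-216/125)*s*s*s*x27*x27 + (-4/5)*s*x23*x23 + (-24/5)*s*x26*x26) _ e25).
    apply (lin_step _ ((-24/25)*s*s*s*x25*x26 + (24/5)*s*x25*x26) _ e26).
    apply (lin_step _ ((89/1000)*s*s*s*s*x25*x25*x25 + (7/75)*s*s*s*s*x25*x26*x26 + (381/625)*s*s*s*s*x25*x27*x27 + (17/50)*s*s*x23*x23*x25 + (27/100)*s*s*x25*x25*x25 + (88/75)*s*s*x25*x26*x26 + (2/25)*s*s*x25*x27*x27 + (12/25)*s*x23*x26*x27 + (-1/5)*x23*x23*x25 + (-9/20)*x25*x25*x25 + (-6/5)*x25*x26*x26 + (-54/25)*x25*x27*x27) _ hs').
    field. }
  assert (x25 = 0) by (destruct (Rmult_integral _ _ k1) as [h|h]; [exact h| exfalso; apply hN; lra]). subst x25.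
  assert (k2 : x23 * (x23*x23 + 6*x26*x26 + (54/5)*x27*x27) = 0).
  { apply (lin_step _ ((-12/5)*s*s*s*x26*x26 + (-588/125)*s*s*s*x27*x27 + (-12/5)*s*x23*x23 + (-12/5)*s*x26*x26 + (-12/5)*s*x27*x27) _ e00).
    apply (lin_step _ ((-24/25)*s*s*s*x26*x27 + (24/5)*s*x26*x27) _ e22).
    apply (lin_step _ ((-12/5)*s*s*s*x26*x26 + (-756/125)*s*s*s*x27*x27 + (-14/5)*s*x23*x23 + (-24/5)*s*x26*x26) _ e23).
    apply (lin_step _ ((-2/5)*s*s*x23*x23 + (-12/5)*s*s*x26*x26 + (-108/25)*s*s*x27*x27) _ e24).
    apply (lin_step _ ((-2/5)*s*s*s*x23*x26 + 2*s*x23*x26) _ e26).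
    apply (lin_step _ ((14/25)*s*s*s*x23*x27 + (-14/5)*s*x23*x27) _ e27).
    apply (lin_step _ ((-1/90)*s*s*x23*x23*x23 + (-7/15)*s*s*x23*x26*x26 + (-113/125)*s*s*x23*x27*x27 + (-1/5)*x23*x23*x23 + (-6/5)*x23*x26*x26 + (-54/25)*x23*x27*x27) _ hs').
    field. }
  assert (x23 = 0) by (destruct (Rmult_integral _ _ k2) as [h|h]; [exact h| exfalso; apply hN; lra]). subst x23.
  assert (k3 : x27 * (6*x26*x26 + (54/5)*x27*x27) = 0).
  { apply (lin_step _ ((1/4)*s*s*x26*x26 + (49/100)*s*s*x27*x27 + (1/4)*x26*x26 + (1/4)*x27*x27) _ e15).
    apply (lin_step _ ((27/100)*s*s*x27*x27 + (3/4)*x26*x26) _ e20).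
    apply (lin_step _ ((-9/20)*s*s*x26*x27 + (-3/4)*x26*x27) _ e21).
    apply (lin_step _ ((-3/20)*s*s*s*x26*x27 + (-3/4)*s*x26*x27) _ e26).
    apply (lin_step _ ((21/100)*s*s*s*x27*x27 + (-3/4)*s*x26*x26 + (3/10)*s*x27*x27) _ e27).
    apply (lin_step _ ((-3/40)*s*s*x26*x26*x27 + (-207/500)*s*s*x27*x27*x27 + (-9/10)*x26*x26*x27 + (-437/200)*x27*x27*x27) _ hs').
    field. }
  assert (x27 = 0) by (destruct (Rmult_integral _ _ k3) as [h|h]; [exact h| exfalso; apply hN; lra]). subst x27.
  assert (k4 : x26 * (6*x26*x26) = 0).
  { apply (lin_step _ ((1/3)*s*s*x26*x26 + (1/3)*x26*x26) _ e14).
    apply (lin_step _ ((-1)*x26*x26) _ e21).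
    apply (lin_step _ ((-1)*s*x26*x26) _ e26).
    apply (lin_step _ ((-2/3)*x26*x26*x26) _ hs').
    field. }
  assert (x26 = 0) by (destruct (Rmult_integral _ _ k4) as [h|h]; [exact h| exfalso; apply hN; lra]). subst x26.
  exfalso; apply hN; ring.
Qed.
Lemma vec_coords (p q : R) (hq : q <> 0) (x00 x01 x02 x03 x04 x05 x06 x07 x10 x11 x12 x13 x14 x15 x16 x17 x20 x21 x22 x23 x24 x25 x26 x27 : R) (mu : oct) :
  mvmul (Bhat p q) (vecof x00 x01 x02 x03 x04 x05 x06 x07 x10 x11 x12 x13 x14 x15 x16 x17 x20 x21 x22 x23 x24 x25 x26 x27) = vrmul (vecof x00 x01 x02 x03 x04 x05 x06 x07 x10 x11 x12 x13 x14 x15 x16 x17 x20 x21 x22 x23 x24 x25 x26 x27) mu ->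
  orth w1 (vecof x00 x01 x02 x03 x04 x05 x06 x07 x10 x11 x12 x13 x14 x15 x16 x17 x20 x21 x22 x23 x24 x25 x26 x27) ->
  x00 = 0 /\ x01 = 0 /\ x02 = (1/3)*sqrt 5*x13 /\ x03 = (3/2)*x15 /\ x04 = 0 /\ x05 = (-2/3)*x13 /\ x06 = 0 /\ x07 = 0 /\ x10 = 0 /\ x11 = 0 /\ x12 = (-1/2)*sqrt 5*x15 /\ x14 = 0 /\ x16 = 0 /\ x17 = 0 /\ x20 = 0 /\ x21 = 0 /\ x22 = 0 /\ x23 = 0 /\ x24 = 0 /\ x25 = 0 /\ x26 = 0 /\ x27 = 0.
Proof.
intros He Ho. rewrite Bhat_eq in He. unfold orth in Ho; rewrite outer_w1 in Ho. destruct mu as [[n0 n1 n2 n3] [n4 n5 n6 n7]].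
assert (hs : sqrt 5 * sqrt 5 = 5) by (apply sqrt_sqrt; lra).
assert (hs0 : 0 < sqrt 5) by (apply sqrt_lt_R0; lra).
assert (hs' : sqrt 5 * sqrt 5 - 5 = 0) by lra.
apply (core (sqrt 5) hs hs0 x00 x01 x02 x03 x04 x05 x06 x07 x10 x11 x12 x13 x14 x15 x16 x17 x20 x21 x22 x23 x24 x25 x26 x27 ((n0 - p)/q) (n1/q) (n2/q) (n3/q) (n4/q) (n5/q) (n6/q) (n7/q)).
- pose proof (f_equal (fun o => q0 (oa o)) (Ho I0)) as r.
  cbv beta iota zeta delta [vecof mk3 mvmul vrmul Wexp Bexp mk33 oadd omul oconj oopp oscal oreal ozero oi oj ok ol qadd qmul qconj qopp q0 q1 q2 q3 oa ob orth vzero] in r.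
  apply (lin_step _ 1 _ (Rminus_diag_eq _ _ r)).
  field.
- pose proof (f_equal (fun o => q1 (oa o)) (Ho I0)) as r.
  cbv beta iota zeta delta [vecof mk3 mvmul vrmul Wexp Bexp mk33 oadd omul oconj oopp oscal oreal ozero oi oj ok ol qadd qmul qconj qopp q0 q1 q2 q3 oa ob orth vzero] in r.
  apply (lin_step _ 1 _ (Rminus_diag_eq _ _ r)).
  field.
- pose proof (f_equal (fun o => q2 (oa o)) (Ho I0)) as r.
  cbv beta iota zeta delta [vecof mk3 mvmul vrmul Wexp Bexp mk33 oadd omul oconj oopp oscal oreal ozero oi oj ok ol qadd qmul qconj qopp q0 q1 q2 q3 oa ob orth vzero] in r.
  apply (lin_step _ 1 _ (Rminus_diag_eq _ _ r)).
  field.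
- pose proof (f_equal (fun o => q3 (oa o)) (Ho I0)) as r.
  cbv beta iota zeta delta [vecof mk3 mvmul vrmul Wexp Bexp mk33 oadd omul oconj oopp oscal oreal ozero oi oj ok ol qadd qmul qconj qopp q0 q1 q2 q3 oa ob orth vzero] in r.
  apply (lin_step _ 1 _ (Rminus_diag_eq _ _ r)).
  field.
- pose proof (f_equal (fun o => q0 (ob o)) (Ho I0)) as r.
  cbv beta iota zeta delta [vecof mk3 mvmul vrmul Wexp Bexp mk33 oadd omul oconj oopp oscal oreal ozero oi oj ok ol qadd qmul qconj qopp q0 q1 q2 q3 oa ob orth vzero] in r.
  apply (lin_step _ 1 _ (Rminus_diag_eq _ _ r)).
  field.
- pose proof (f_equal (fun o => q1 (ob o)) (Ho I0)) as r.
  cbv beta iota zeta delta [vecof mk3 mvmul vrmul Wexp Bexp mk33 oadd omul oconj oopp oscal oreal ozero oi oj ok ol qadd qmul qconj qopp q0 q1 q2 q3 oa ob orth vzero] in r.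
  apply (lin_step _ 1 _ (Rminus_diag_eq _ _ r)).
  field.
- pose proof (f_equal (fun o => q2 (ob o)) (Ho I0)) as r.
  cbv beta iota zeta delta [vecof mk3 mvmul vrmul Wexp Bexp mk33 oadd omul oconj oopp oscal oreal ozero oi oj ok ol qadd qmul qconj qopp q0 q1 q2 q3 oa ob orth vzero] in r.
  apply (lin_step _ 1 _ (Rminus_diag_eq _ _ r)).
  field.
- pose proof (f_equal (fun o => q3 (ob o)) (Ho I0)) as r.
  cbv beta iota zeta delta [vecof mk3 mvmul vrmul Wexp Bexp mk33 oadd omul oconj oopp oscal oreal ozero oi oj ok ol qadd qmul qconj qopp q0 q1 q2 q3 oa ob orth vzero] in r.
  apply (lin_step _ 1 _ (Rminus_diag_eq _ _ r)).
  field.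
- pose proof (f_equal (fun o => q0 (oa o)) (Ho I1)) as r.
  cbv beta iota zeta delta [vecof mk3 mvmul vrmul Wexp Bexp mk33 oadd omul oconj oopp oscal oreal ozero oi oj ok ol qadd qmul qconj qopp q0 q1 q2 q3 oa ob orth vzero] in r.
  apply (lin_step _ 1 _ (Rminus_diag_eq _ _ r)).
  apply (lin_step _ ((-1)*x10 + (-1)*x25) _ hs').
  field.
- pose proof (f_equal (fun o => q1 (oa o)) (Ho I1)) as r.
  cbv beta iota zeta delta [vecof mk3 mvmul vrmul Wexp Bexp mk33 oadd omul oconj oopp oscal oreal ozero oi oj ok ol qadd qmul qconj qopp q0 q1 q2 q3 oa ob orth vzero] in r.
  apply (lin_step _ 1 _ (Rminus_diag_eq _ _ r)).
  apply (lin_step _ ((-1)*x11 + (-1)*x24) _ hs').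
  field.
- pose proof (f_equal (fun o => q2 (oa o)) (Ho I1)) as r.
  cbv beta iota zeta delta [vecof mk3 mvmul vrmul Wexp Bexp mk33 oadd omul oconj oopp oscal oreal ozero oi oj ok ol qadd qmul qconj qopp q0 q1 q2 q3 oa ob orth vzero] in r.
  apply (lin_step _ 1 _ (Rminus_diag_eq _ _ r)).
  apply (lin_step _ ((-1)*x12 + x27) _ hs').
  field.
- pose proof (f_equal (fun o => q3 (oa o)) (Ho I1)) as r.
  cbv beta iota zeta delta [vecof mk3 mvmul vrmul Wexp Bexp mk33 oadd omul oconj oopp oscal oreal ozero oi oj ok ol qadd qmul qconj qopp q0 q1 q2 q3 oa ob orth vzero] in r.
  apply (lin_step _ 1 _ (Rminus_diag_eq _ _ r)).
  apply (lin_step _ ((-1)*x13 + (-1)*x26) _ hs').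
  field.
- pose proof (f_equal (fun o => q0 (ob o)) (Ho I1)) as r.
  cbv beta iota zeta delta [vecof mk3 mvmul vrmul Wexp Bexp mk33 oadd omul oconj oopp oscal oreal ozero oi oj ok ol qadd qmul qconj qopp q0 q1 q2 q3 oa ob orth vzero] in r.
  apply (lin_step _ 1 _ (Rminus_diag_eq _ _ r)).
  apply (lin_step _ ((-1)*x14 + x21) _ hs').
  field.
- pose proof (f_equal (fun o => q1 (ob o)) (Ho I1)) as r.
  cbv beta iota zeta delta [vecof mk3 mvmul vrmul Wexp Bexp mk33 oadd omul oconj oopp oscal oreal ozero oi oj ok ol qadd qmul qconj qopp q0 q1 q2 q3 oa ob orth vzero] in r.
  apply (lin_step _ 1 _ (Rminus_diag_eq _ _ r)).
  apply (lin_step _ ((-1)*x15 + x20) _ hs').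
  field.
- pose proof (f_equal (fun o => q2 (ob o)) (Ho I1)) as r.
  cbv beta iota zeta delta [vecof mk3 mvmul vrmul Wexp Bexp mk33 oadd omul oconj oopp oscal oreal ozero oi oj ok ol qadd qmul qconj qopp q0 q1 q2 q3 oa ob orth vzero] in r.
  apply (lin_step _ 1 _ (Rminus_diag_eq _ _ r)).
  apply (lin_step _ ((-1)*x16 + x23) _ hs').
  field.
- pose proof (f_equal (fun o => q3 (ob o)) (Ho I1)) as r.
  cbv beta iota zeta delta [vecof mk3 mvmul vrmul Wexp Bexp mk33 oadd omul oconj oopp oscal oreal ozero oi oj ok ol qadd qmul qconj qopp q0 q1 q2 q3 oa ob orth vzero] in r.
  apply (lin_step _ 1 _ (Rminus_diag_eq _ _ r)).
  apply (lin_step _ ((-1)*x17 + (-1)*x22) _ hs').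
  field.
- pose proof (f_equal (fun o => q0 (oa o)) (Ho I2)) as r.
  cbv beta iota zeta delta [vecof mk3 mvmul vrmul Wexp Bexp mk33 oadd omul oconj oopp oscal oreal ozero oi oj ok ol qadd qmul qconj qopp q0 q1 q2 q3 oa ob orth vzero] in r.
  apply (lin_step _ 1 _ (Rminus_diag_eq _ _ r)).
  apply (lin_step _ (x15 + (-1)*x20) _ hs').
  field.
- pose proof (f_equal (fun o => q1 (oa o)) (Ho I2)) as r.
  cbv beta iota zeta delta [vecof mk3 mvmul vrmul Wexp Bexp mk33 oadd omul oconj oopp oscal oreal ozero oi oj ok ol qadd qmul qconj qopp q0 q1 q2 q3 oa ob orth vzero] in r.
  apply (lin_step _ 1 _ (Rminus_diag_eq _ _ r)).
  apply (lin_step _ (x14 + (-1)*x21) _ hs').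
  field.
- pose proof (f_equal (fun o => q2 (oa o)) (Ho I2)) as r.
  cbv beta iota zeta delta [vecof mk3 mvmul vrmul Wexp Bexp mk33 oadd omul oconj oopp oscal oreal ozero oi oj ok ol qadd qmul qconj qopp q0 q1 q2 q3 oa ob orth vzero] in r.
  apply (lin_step _ 1 _ (Rminus_diag_eq _ _ r)).
  apply (lin_step _ ((-1)*x17 + (-1)*x22) _ hs').
  field.
- pose proof (f_equal (fun o => q3 (oa o)) (Ho I2)) as r.
  cbv beta iota zeta delta [vecof mk3 mvmul vrmul Wexp Bexp mk33 oadd omul oconj oopp oscal oreal ozero oi oj ok ol qadd qmul qconj qopp q0 q1 q2 q3 oa ob orth vzero] in r.
  apply (lin_step _ 1 _ (Rminus_diag_eq _ _ r)).
  apply (lin_step _ (x16 + (-1)*x23) _ hs').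
  field.
- pose proof (f_equal (fun o => q0 (ob o)) (Ho I2)) as r.
  cbv beta iota zeta delta [vecof mk3 mvmul vrmul Wexp Bexp mk33 oadd omul oconj oopp oscal oreal ozero oi oj ok ol qadd qmul qconj qopp q0 q1 q2 q3 oa ob orth vzero] in r.
  apply (lin_step _ 1 _ (Rminus_diag_eq _ _ r)).
  apply (lin_step _ ((-1)*x11 + (-1)*x24) _ hs').
  field.
- pose proof (f_equal (fun o => q1 (ob o)) (Ho I2)) as r.
  cbv beta iota zeta delta [vecof mk3 mvmul vrmul Wexp Bexp mk33 oadd omul oconj oopp oscal oreal ozero oi oj ok ol qadd qmul qconj qopp q0 q1 q2 q3 oa ob orth vzero] in r.
  apply (lin_step _ 1 _ (Rminus_diag_eq _ _ r)).
  apply (lin_step _ ((-1)*x10 + (-1)*x25) _ hs').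
  field.
- pose proof (f_equal (fun o => q2 (ob o)) (Ho I2)) as r.
  cbv beta iota zeta delta [vecof mk3 mvmul vrmul Wexp Bexp mk33 oadd omul oconj oopp oscal oreal ozero oi oj ok ol qadd qmul qconj qopp q0 q1 q2 q3 oa ob orth vzero] in r.
  apply (lin_step _ 1 _ (Rminus_diag_eq _ _ r)).
  apply (lin_step _ ((-1)*x13 + (-1)*x26) _ hs').
  field.
- pose proof (f_equal (fun o => q3 (ob o)) (Ho I2)) as r.
  cbv beta iota zeta delta [vecof mk3 mvmul vrmul Wexp Bexp mk33 oadd omul oconj oopp oscal oreal ozero oi oj ok ol qadd qmul qconj qopp q0 q1 q2 q3 oa ob orth vzero] in r.
  apply (lin_step _ 1 _ (Rminus_diag_eq _ _ r)).
  apply (lin_step _ (x12 + (-1)*x27) _ hs').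
  field.
- pose proof (f_equal (fun f => q0 (oa (f I0))) He) as r.
  cbv beta iota zeta delta [vecof mk3 mvmul vrmul Wexp Bexp mk33 oadd omul oconj oopp oscal oreal ozero oi oj ok ol qadd qmul qconj qopp q0 q1 q2 q3 oa ob orth vzero] in r.
  apply (lin_step _ (/q) _ (Rminus_diag_eq _ _ r)).
  field; exact hq.
- pose proof (f_equal (fun f => q1 (oa (f I0))) He) as r.
  cbv beta iota zeta delta [vecof mk3 mvmul vrmul Wexp Bexp mk33 oadd omul oconj oopp oscal oreal ozero oi oj ok ol qadd qmul qconj qopp q0 q1 q2 q3 oa ob orth vzero] in r.
  apply (lin_step _ (/q) _ (Rminus_diag_eq _ _ r)).
  field; exact hq.
- pose proof (f_equal (fun f => q2 (oa (f I0))) He) as r.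
  cbv beta iota zeta delta [vecof mk3 mvmul vrmul Wexp Bexp mk33 oadd omul oconj oopp oscal oreal ozero oi oj ok ol qadd qmul qconj qopp q0 q1 q2 q3 oa ob orth vzero] in r.
  apply (lin_step _ (/q) _ (Rminus_diag_eq _ _ r)).
  field; exact hq.
- pose proof (f_equal (fun f => q3 (oa (f I0))) He) as r.
  cbv beta iota zeta delta [vecof mk3 mvmul vrmul Wexp Bexp mk33 oadd omul oconj oopp oscal oreal ozero oi oj ok ol qadd qmul qconj qopp q0 q1 q2 q3 oa ob orth vzero] in r.
  apply (lin_step _ (/q) _ (Rminus_diag_eq _ _ r)).
  field; exact hq.
- pose proof (f_equal (fun f => q0 (ob (f I0))) He) as r.
  cbv beta iota zeta delta [vecof mk3 mvmul vrmul Wexp Bexp mk33 oadd omul oconj oopp oscal oreal ozero oi oj ok ol qadd qmul qconj qopp q0 q1 q2 q3 oa ob orth vzero] in r.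
  apply (lin_step _ (/q) _ (Rminus_diag_eq _ _ r)).
  field; exact hq.
- pose proof (f_equal (fun f => q1 (ob (f I0))) He) as r.
  cbv beta iota zeta delta [vecof mk3 mvmul vrmul Wexp Bexp mk33 oadd omul oconj oopp oscal oreal ozero oi oj ok ol qadd qmul qconj qopp q0 q1 q2 q3 oa ob orth vzero] in r.
  apply (lin_step _ (/q) _ (Rminus_diag_eq _ _ r)).
  field; exact hq.
- pose proof (f_equal (fun f => q2 (ob (f I0))) He) as r.
  cbv beta iota zeta delta [vecof mk3 mvmul vrmul Wexp Bexp mk33 oadd omul oconj oopp oscal oreal ozero oi oj ok ol qadd qmul qconj qopp q0 q1 q2 q3 oa ob orth vzero] in r.
  apply (lin_step _ (/q) _ (Rminus_diag_eq _ _ r)).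
  field; exact hq.
- pose proof (f_equal (fun f => q3 (ob (f I0))) He) as r.
  cbv beta iota zeta delta [vecof mk3 mvmul vrmul Wexp Bexp mk33 oadd omul oconj oopp oscal oreal ozero oi oj ok ol qadd qmul qconj qopp q0 q1 q2 q3 oa ob orth vzero] in r.
  apply (lin_step _ (/q) _ (Rminus_diag_eq _ _ r)).
  field; exact hq.
- pose proof (f_equal (fun f => q0 (oa (f I1))) He) as r.
  cbv beta iota zeta delta [vecof mk3 mvmul vrmul Wexp Bexp mk33 oadd omul oconj oopp oscal oreal ozero oi oj ok ol qadd qmul qconj qopp q0 q1 q2 q3 oa ob orth vzero] in r.
  apply (lin_step _ (/q) _ (Rminus_diag_eq _ _ r)).
  field; exact hq.
- pose proof (f_equal (fun f => q1 (oa (f I1))) He) as r.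
  cbv beta iota zeta delta [vecof mk3 mvmul vrmul Wexp Bexp mk33 oadd omul oconj oopp oscal oreal ozero oi oj ok ol qadd qmul qconj qopp q0 q1 q2 q3 oa ob orth vzero] in r.
  apply (lin_step _ (/q) _ (Rminus_diag_eq _ _ r)).
  field; exact hq.
- pose proof (f_equal (fun f => q2 (oa (f I1))) He) as r.
  cbv beta iota zeta delta [vecof mk3 mvmul vrmul Wexp Bexp mk33 oadd omul oconj oopp oscal oreal ozero oi oj ok ol qadd qmul qconj qopp q0 q1 q2 q3 oa ob orth vzero] in r.
  apply (lin_step _ (/q) _ (Rminus_diag_eq _ _ r)).
  field; exact hq.
- pose proof (f_equal (fun f => q3 (oa (f I1))) He) as r.
  cbv beta iota zeta delta [vecof mk3 mvmul vrmul Wexp Bexp mk33 oadd omul oconj oopp oscal oreal ozero oi oj ok ol qadd qmul qconj qopp q0 q1 q2 q3 oa ob orth vzero] in r.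
  apply (lin_step _ (/q) _ (Rminus_diag_eq _ _ r)).
  field; exact hq.
- pose proof (f_equal (fun f => q0 (ob (f I1))) He) as r.
  cbv beta iota zeta delta [vecof mk3 mvmul vrmul Wexp Bexp mk33 oadd omul oconj oopp oscal oreal ozero oi oj ok ol qadd qmul qconj qopp q0 q1 q2 q3 oa ob orth vzero] in r.
  apply (lin_step _ (/q) _ (Rminus_diag_eq _ _ r)).
  field; exact hq.
- pose proof (f_equal (fun f => q1 (ob (f I1))) He) as r.
  cbv beta iota zeta delta [vecof mk3 mvmul vrmul Wexp Bexp mk33 oadd omul oconj oopp oscal oreal ozero oi oj ok ol qadd qmul qconj qopp q0 q1 q2 q3 oa ob orth vzero] in r.
  apply (lin_step _ (/q) _ (Rminus_diag_eq _ _ r)).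
  field; exact hq.
- pose proof (f_equal (fun f => q2 (ob (f I1))) He) as r.
  cbv beta iota zeta delta [vecof mk3 mvmul vrmul Wexp Bexp mk33 oadd omul oconj oopp oscal oreal ozero oi oj ok ol qadd qmul qconj qopp q0 q1 q2 q3 oa ob orth vzero] in r.
  apply (lin_step _ (/q) _ (Rminus_diag_eq _ _ r)).
  field; exact hq.
- pose proof (f_equal (fun f => q3 (ob (f I1))) He) as r.
  cbv beta iota zeta delta [vecof mk3 mvmul vrmul Wexp Bexp mk33 oadd omul oconj oopp oscal oreal ozero oi oj ok ol qadd qmul qconj qopp q0 q1 q2 q3 oa ob orth vzero] in r.
  apply (lin_step _ (/q) _ (Rminus_diag_eq _ _ r)).
  field; exact hq.
- pose proof (f_equal (fun f => q0 (oa (f I2))) He) as r.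
  cbv beta iota zeta delta [vecof mk3 mvmul vrmul Wexp Bexp mk33 oadd omul oconj oopp oscal oreal ozero oi oj ok ol qadd qmul qconj qopp q0 q1 q2 q3 oa ob orth vzero] in r.
  apply (lin_step _ (/q) _ (Rminus_diag_eq _ _ r)).
  field; exact hq.
- pose proof (f_equal (fun f => q1 (oa (f I2))) He) as r.
  cbv beta iota zeta delta [vecof mk3 mvmul vrmul Wexp Bexp mk33 oadd omul oconj oopp oscal oreal ozero oi oj ok ol qadd qmul qconj qopp q0 q1 q2 q3 oa ob orth vzero] in r.
  apply (lin_step _ (/q) _ (Rminus_diag_eq _ _ r)).
  field; exact hq.
- pose proof (f_equal (fun f => q2 (oa (f I2))) He) as r.
  cbv beta iota zeta delta [vecof mk3 mvmul vrmul Wexp Bexp mk33 oadd omul oconj oopp oscal oreal ozero oi oj ok ol qadd qmul qconj qopp q0 q1 q2 q3 oa ob orth vzero] in r.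
  apply (lin_step _ (/q) _ (Rminus_diag_eq _ _ r)).
  field; exact hq.
- pose proof (f_equal (fun f => q3 (oa (f I2))) He) as r.
  cbv beta iota zeta delta [vecof mk3 mvmul vrmul Wexp Bexp mk33 oadd omul oconj oopp oscal oreal ozero oi oj ok ol qadd qmul qconj qopp q0 q1 q2 q3 oa ob orth vzero] in r.
  apply (lin_step _ (/q) _ (Rminus_diag_eq _ _ r)).
  field; exact hq.
- pose proof (f_equal (fun f => q0 (ob (f I2))) He) as r.
  cbv beta iota zeta delta [vecof mk3 mvmul vrmul Wexp Bexp mk33 oadd omul oconj oopp oscal oreal ozero oi oj ok ol qadd qmul qconj qopp q0 q1 q2 q3 oa ob orth vzero] in r.
  apply (lin_step _ (/q) _ (Rminus_diag_eq _ _ r)).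
  field; exact hq.
- pose proof (f_equal (fun f => q1 (ob (f I2))) He) as r.
  cbv beta iota zeta delta [vecof mk3 mvmul vrmul Wexp Bexp mk33 oadd omul oconj oopp oscal oreal ozero oi oj ok ol qadd qmul qconj qopp q0 q1 q2 q3 oa ob orth vzero] in r.
  apply (lin_step _ (/q) _ (Rminus_diag_eq _ _ r)).
  field; exact hq.
- pose proof (f_equal (fun f => q2 (ob (f I2))) He) as r.
  cbv beta iota zeta delta [vecof mk3 mvmul vrmul Wexp Bexp mk33 oadd omul oconj oopp oscal oreal ozero oi oj ok ol qadd qmul qconj qopp q0 q1 q2 q3 oa ob orth vzero] in r.
  apply (lin_step _ (/q) _ (Rminus_diag_eq _ _ r)).
  field; exact hq.
- pose proof (f_equal (fun f => q3 (ob (f I2))) He) as r.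
  cbv beta iota zeta delta [vecof mk3 mvmul vrmul Wexp Bexp mk33 oadd omul oconj oopp oscal oreal ozero oi oj ok ol qadd qmul qconj qopp q0 q1 q2 q3 oa ob orth vzero] in r.
  apply (lin_step _ (/q) _ (Rminus_diag_eq _ _ r)).
  field; exact hq.
Qed.
Lemma vec_exists (u : ovec) : exists x00 x01 x02 x03 x04 x05 x06 x07 x10 x11 x12 x13 x14 x15 x16 x17 x20 x21 x22 x23 x24 x25 x26 x27, u = vecof x00 x01 x02 x03 x04 x05 x06 x07 x10 x11 x12 x13 x14 x15 x16 x17 x20 x21 x22 x23 x24 x25 x26 x27.
Proof.
exists (q0 (oa (u I0))), (q1 (oa (u I0))), (q2 (oa (u I0))), (q3 (oa (u I0))), (q0 (ob (u I0))), (q1 (ob (u I0))), (q2 (ob (u I0))), (q3 (ob (u I0))), (q0 (oa (u I1))), (q1 (oa (u I1))), (q2 (oa (u I1))), (q3 (oa (u I1))), (q0 (ob (u I1))), (q1 (ob (u I1))), (q2 (ob (u I1))), (q3 (ob (u I1))), (q0 (oa (u I2))), (q1 (oa (u I2))), (q2 (oa (u I2))), (q3 (oa (u I2))), (q0 (ob (u I2))), (q1 (ob (u I2))), (q2 (ob (u I2))), (q3 (ob (u I2))).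
apply functional_extensionality; intros []; unfold vecof, mk3;
[destruct (u I0) as [[] []] | destruct (u I1) as [[] []] | destruct (u I2) as [[] []]]; reflexivity.
Qed.

Theorem mainTheorem12 (p q : R) (hq : q <> 0) :
  ~ (exists (u v : ovec) (mu nu : oct),
       ~ vzero u /\ ~ vzero v /\
       mvmul (Bhat p q) u = vrmul u mu /\
       mvmul (Bhat p q) v = vrmul v nu /\
       orth w1 u /\ orth u w1 /\
       orth w1 v /\ orth v w1 /\
       orth u v /\ orth v u).
Proof.
intros [u [v [mu [nu [hu [hv [Hu [Hv [o1 [o2 [o3 [o4 [o5 o6]]]]]]]]]]]]].
destruct (vec_exists u) as [x00 [x01 [x02 [x03 [x04 [x05 [x06 [x07 [x10 [x11 [x12 [x13 [x14 [x15 [x16 [x17 [x20 [x21 [x22 [x23 [x24 [x25 [x26 [x27 Eu]]]]]]]]]]]]]]]]]]]]]]]]. subst u.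
destruct (vec_exists v) as [y00 [y01 [y02 [y03 [y04 [y05 [y06 [y07 [y10 [y11 [y12 [y13 [y14 [y15 [y16 [y17 [y20 [y21 [y22 [y23 [y24 [y25 [y26 [y27 Ev]]]]]]]]]]]]]]]]]]]]]]]]. subst v.
destruct (vec_coords p q hq x00 x01 x02 x03 x04 x05 x06 x07 x10 x11 x12 x13 x14 x15 x16 x17 x20 x21 x22 x23 x24 x25 x26 x27 mu Hu o1) as [hx0 [hx1 [hx2 [hx3 [hx4 [hx5 [hx6 [hx7 [hx8 [hx9 [hx10 [hx11 [hx12 [hx13 [hx14 [hx15 [hx16 [hx17 [hx18 [hx19 [hx20 hx21]]]]]]]]]]]]]]]]]]]]].
destruct (vec_coords p q hq y00 y01 y02 y03 y04 y05 y06 y07 y10 y11 y12 y13 y14 y15 y16 y17 y20 y21 y22 y23 y24 y25 y26 y27 nu Hv o3) as [hy0 [hy1 [hy2 [hy3 [hy4 [hy5 [hy6 [hy7 [hy8 [hy9 [hy10 [hy11 [hy12 [hy13 [hy14 [hy15 [hy16 [hy17 [hy18 [hy19 [hy20 hy21]]]]]]]]]]]]]]]]]]]]].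
subst x00 x01 x02 x03 x04 x05 x06 x07 x10 x11 x12 x14 x16 x17 x20 x21 x22 x23 x24 x25 x26 x27.
subst y00 y01 y02 y03 y04 y05 y06 y07 y10 y11 y12 y14 y16 y17 y20 y21 y22 y23 y24 y25 y26 y27.
assert (hs : sqrt 5 * sqrt 5 = 5) by (apply sqrt_sqrt; lra).
assert (hs' : sqrt 5 * sqrt 5 - 5 = 0) by lra.
pose proof (f_equal (fun o => q3 (oa o)) (o5 I1)) as r.
cbv beta iota zeta delta [vecof mk3 mvmul outer oadd omul oconj oopp oscal oreal ozero qadd qmul qconj qopp q0 q1 q2 q3 oa ob orth vzero] in r.
assert (hc : (2*x13*x13 + (9/2)*x15*x15) * y13 = 0).
{ apply (lin_step _ 1 _ (Rminus_diag_eq _ _ r)).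
  apply (lin_step _ ((-1/9)*x13*x13*y13 + (1/4)*x13*x15*y15 + (-1/2)*x15*x15*y13) _ hs').
  field. }
clear r.
pose proof (f_equal (fun o => q1 (ob o)) (o5 I1)) as r.
cbv beta iota zeta delta [vecof mk3 mvmul outer oadd omul oconj oopp oscal oreal ozero qadd qmul qconj qopp q0 q1 q2 q3 oa ob orth vzero] in r.
assert (hd : (2*x13*x13 + (9/2)*x15*x15) * y15 = 0).
{ apply (lin_step _ 1 _ (Rminus_diag_eq _ _ r)).
  apply (lin_step _ ((-1/9)*x13*x15*y13 + (-1/4)*x15*x15*y15) _ hs').
  field. }
clear r.
destruct (Req_dec (2*x13*x13 + (9/2)*x15*x15) 0) as [hK|hK].
- apply hu. assert (x13 = 0) by nra. assert (x15 = 0) by nra. subst x13 x15.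
  intros []; cbv [vecof mk3 ozero oreal]; apply oct_ext; ring.
- destruct (Rmult_integral _ _ hc) as [h|h]; [contradiction|]. destruct (Rmult_integral _ _ hd) as [h'|h']; [contradiction|].
  subst y13 y15. apply hv. intros []; cbv [vecof mk3 ozero oreal]; apply oct_ext; ring.
Qed.
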